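(* Fix $t>0$. The transformation $\mathcal{T}$ on $C([0,t];\mathbb{R})$ has the following properties. (i) For every $\phi\in C([0,t];\mathbb{R})$, $\mathcal{T}(\phi)(t)=-\phi_t$. (ii) For every $\phi\in C([0,t];\mathbb{R})$, \[\frac{1}{A_s(\mathcal{T}(\phi))}=\frac{1}{A_s(\phi)}+\frac{e^{2\phi_t}-1}{A_t(\phi)},\quad 0<s\le t;\] in particular $A_t(\mathcal{T}(\phi))=e^{-2\phi_t}A_t(\phi)$. (iii) $Z_s(\mathcal{T}(\phi))=Z_s(\phi)$ for all $0\le s\le t$ and all $\phi$, i.e. $Z\circ\mathcal{T}=Z$. (iv) For every $z\in\mathbb{R}$, $\mathcal{T}\circ\mathbb{T}_z\circ\mathcal{T}\circ\mathbb{T}_z=\mathrm{Id}$; in particular $\mathcal{T}\circ\mathcal{T}=\mathrm{Id}$. Moreover $(\mathcal{T}\circ\mathbb{T}_z)(\phi)=\mathbb{T}_{2\phi_t-z}(\phi)$ for all $\phi\in C([0,t];\mathbb{R})$ and $z\in\mathbb{R}$. (v) For every $\phi\in C([0,t];\mathbb{R})$ with $\phi_0=0$, $(R\circ\mathcal{T})(\phi)=(\mathcal{T}\circ R)(\phi)$.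
   Context: For $\phi\in C([0,t];\mathbb{R})$ let $A_s(\phi)=\int_0^s e^{2\phi_u}\,du$ and $Z_s(\phi)=e^{-\phi_s}A_s(\phi)$. For $z\in\mathbb{R}$, $\mathbb{T}_z(\phi)(s)=\phi_s-\log\{1+\frac{A_s(\phi)}{A_t(\phi)}(e^z-1)\}$, $0\le s\le t$; $\mathcal{T}(\phi)(s)=\mathbb{T}_{2\phi_t}(\phi)(s)$; $R(\phi)(s)=\phi_{t-s}-\phi_t$, $0\le s\le t$ (time reversal); $\mathrm{Id}$ is the identity map on $C([0,t];\mathbb{R})$. *)

(* Defs.v *)
From Stdlib Require Import Reals.
From Coquelicot Require Import Coquelicot.
Open Scope R_scope.

(* An element of C([0,t];R) is represented by a function R -> R that is
   continuous on [0,t] (as a function on the subspace [0,t]); values outside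
   [0,t] are irrelevant. Equalities of paths are stated pointwise on [0,t]. *)
Definition cont_on_0t (t : R) (phi : R -> R) : Prop :=
  forall u, 0 <= u <= t ->
    filterlim phi (within (fun x => 0 <= x <= t) (locally u)) (locally (phi u)).

Definition A (phi : R -> R) (s : R) : R := RInt (fun u => exp (2 * phi u)) 0 s.

Definition Zf (phi : R -> R) (s : R) : R := exp (- phi s) * A phi s.

Definition bbT (t z : R) (phi : R -> R) (s : R) : R :=
  phi s - ln (1 + A phi s / A phi t * (exp z - 1)).

Definition calT (t : R) (phi : R -> R) : R -> R := bbT t (2 * phi t) phi.

Definition Rev (t : R) (phi : R -> R) (s : R) : R := phi (t - s) - phi t.

(* Main.v *)
Require Import Defs.
From Stdlib Require Import Reals Lra Psatz.
From Coquelicot Require Import Coquelicot.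
Open Scope R_scope.

Definition cl (t u : R) : R := (Rabs u - Rabs (u - t) + t) / 2.

Lemma cl_in t u : 0 <= t -> 0 <= cl t u <= t.
Proof. intros Ht. unfold cl. unfold Rabs; repeat destruct Rcase_abs; lra. Qed.

Lemma cl_id t u : 0 <= u <= t -> cl t u = u.
Proof. intros H. unfold cl. unfold Rabs; repeat destruct Rcase_abs; lra. Qed.

Lemma cl_cont t x : continuous (cl t) x.
Proof.
  unfold cl.
  apply (continuous_ext (fun u => (Rabs u - Rabs (u - t) + t) * / 2)).
  { intros; reflexivity. }
  apply (continuous_mult (fun u => Rabs u - Rabs (u - t) + t) (fun _ => /2)).
  2: apply continuous_const.
  apply (continuous_plus (fun u => Rabs u - Rabs (u - t)) (fun _ => t)).
  2: apply continuous_const.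
  apply (continuous_minus Rabs (fun u => Rabs (u - t))).
  - apply continuous_Rabs.
  - apply continuous_Rabs_comp.
    apply (continuous_minus (fun u => u) (fun _ => t)).
    apply continuous_id. apply continuous_const.
Qed.

Definition good (t : R) (psi : R -> R) : Prop :=
  exists g, (forall x, continuous g x) /\ forall u, 0 <= u <= t -> psi u = g u.

Lemma good_of_cont t phi : 0 < t -> cont_on_0t t phi -> good t phi.
Proof.
  intros Ht Hc. exists (fun u => phi (cl t u)). split.
  - intros x. unfold continuous.
    pose proof (Hc (cl t x) (cl_in t x (Rlt_le _ _ Ht))) as H.
    intros P HP. specialize (H P HP).
    unfold filtermap in *. simpl in *.
    pose proof (cl_cont t x _ H) as H2. simpl in H2. unfold filtermap in H2.
    eapply filter_imp; [|exact H2]. simpl. intros u Hu. apply Hu. apply cl_in. lra.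
  - intros u Hu. rewrite cl_id; auto.
Qed.

Section G.
Variable g : R -> R.
Hypothesis Hg : forall x, continuous g x.

Definition fg u := exp (2 * g u).
Definition Ag s := RInt fg 0 s.

Lemma fg_cont x : continuous fg x.
Proof.
  unfold fg. apply continuous_exp_comp.
  apply (continuous_mult (fun _ => 2) g). apply continuous_const. apply Hg.
Qed.

Lemma fg_ex a b : ex_RInt fg a b.
Proof. apply (@ex_RInt_continuous R_CompleteNormedModule). intros; apply fg_cont. Qed.

Lemma Ag_deriv x : is_derive Ag x (fg x).
Proof.
  apply (is_derive_RInt fg Ag 0 x).
  - apply filter_forall. intros b. apply (@RInt_correct R_CompleteNormedModule). apply fg_ex.
  - apply fg_cont.
Qed.

Lemma Ag_cont x : continuous Ag x.
Proof. apply (@ex_derive_continuous R_AbsRing R_NormedModule). eexists. apply Ag_deriv. Qed.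

Lemma Ag_0 : Ag 0 = 0.
Proof. unfold Ag. rewrite RInt_point. reflexivity. Qed.

Lemma Ag_chasles a b : Ag b = Ag a + RInt fg a b.
Proof.
  unfold Ag. rewrite <- (RInt_Chasles fg 0 a b) by apply fg_ex. reflexivity.
Qed.

Lemma Ag_pos s : 0 < s -> 0 < Ag s.
Proof.
  intros Hs. apply RInt_gt_0; auto.
  - intros; unfold fg; apply exp_pos.
  - intros; apply fg_cont.
Qed.

Lemma Ag_mono a b : a <= b -> Ag a <= Ag b.
Proof.
  intros H. rewrite (Ag_chasles a b).
  assert (0 <= RInt fg a b). { apply RInt_ge_0; auto. apply fg_ex.
    intros; unfold fg; left; apply exp_pos. }
  lra.
Qed.

Lemma Ag_nonneg s : 0 <= s -> 0 <= Ag s.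
Proof. intros H. rewrite <- Ag_0. apply Ag_mono; auto. Qed.

End G.

Lemma conv_pos r c : 0 <= r <= 1 -> -1 < c -> 0 < 1 + r * c.
Proof. intros [H1 H2] H. destruct (Rle_lt_or_eq_dec _ _ H2) as [H3|H3]. - assert (0 <= r * (c + 1)) by (apply Rmult_le_pos; lra). nra. - subst; lra. Qed.

Section K.
Variable g : R -> R.
Hypothesis Hg : forall x, continuous g x.
Variable t c : R.
Hypothesis Ht : 0 < t.
Hypothesis Hc : -1 < c.

Lemma D_pos u : 0 <= u <= t -> 0 < 1 + Ag g u / Ag g t * c.
Proof.
  intros Hu. apply conv_pos; auto.
  pose proof (Ag_pos g Hg t Ht). pose proof (Ag_nonneg g Hg u (proj1 Hu)).
  pose proof (Ag_mono g Hg u t (proj2 Hu)).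
  split. apply Rdiv_le_0_compat; lra.
  apply (proj1 (Rdiv_le_1 _ _ H)); lra.
Qed.

Lemma D_ne u : 0 <= u <= t -> Ag g t <> 0 /\ Ag g t + Ag g u * c <> 0.
Proof.
  intros Hu. pose proof (D_pos u Hu) as HD. pose proof (Ag_pos g Hg t Ht) as HT.
  split; [lra|].
  replace (Ag g t + Ag g u * c) with (Ag g t * (1 + Ag g u / Ag g t * c)) by (field; lra).
  apply Rgt_not_eq. apply Rmult_lt_0_compat; lra.
Qed.

Lemma F_deriv x : 0 <= x <= t ->
  is_derive (fun u => Ag g u / (1 + Ag g u / Ag g t * c)) x
    (fg g x / (1 + Ag g x / Ag g t * c) ^ 2).
Proof.
  intros Hx. pose proof (D_pos x Hx) as HD. pose proof (Ag_pos g Hg t Ht) as HT.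
  pose proof (Ag_deriv g Hg x) as Hd.
  assert (Hdd : Derive (fun x0 : R => Ag g x0) x = fg g x) by (apply is_derive_unique; exact Hd).
  assert (Hex : ex_derive (fun x0 : R => Ag g x0) x) by (eexists; exact Hd).
  auto_derive.
  - unfold Rdiv in HD. repeat split; auto; lra.
  - rewrite Hdd. unfold Rdiv in *. field. split; [lra|].
    replace (Ag g t + Ag g x * c) with (Ag g t * (1 + Ag g x * / Ag g t * c)) by (field; lra).
    apply Rgt_not_eq. apply Rmult_lt_0_compat; lra.
Qed.

Lemma D_cont x : continuous (fun u => 1 + Ag g u / Ag g t * c) x.
Proof.
  apply (continuous_plus (fun _ => 1) (fun u => Ag g u / Ag g t * c)).
  apply continuous_const.
  apply (continuous_mult (fun u => Ag g u / Ag g t) (fun _ => c)); [|apply continuous_const].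
  apply (continuous_mult (Ag g) (fun _ => / Ag g t)); [|apply continuous_const].
  apply Ag_cont; auto.
Qed.

Lemma df_cont x : 0 <= x <= t ->
  continuous (fun u => fg g u / (1 + Ag g u / Ag g t * c) ^ 2) x.
Proof.
  intros Hx. pose proof (D_pos x Hx) as HD.
  apply (continuous_mult (fg g) (fun u => / (1 + Ag g u / Ag g t * c) ^ 2)).
  apply fg_cont; auto.
  apply continuous_Rinv_comp.
  - apply (continuous_ext (fun u => (1 + Ag g u / Ag g t * c) * ((1 + Ag g u / Ag g t * c) * 1))).
    { intros; reflexivity. }
    apply (continuous_mult (fun u => 1 + Ag g u / Ag g t * c)). apply D_cont.
    apply (continuous_mult (fun u => 1 + Ag g u / Ag g t * c) (fun _ => 1)). apply D_cont.
    apply continuous_const.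
  - apply pow_nonzero. lra.
Qed.

Lemma key s : 0 <= s <= t ->
  RInt (fun u => exp (2 * (g u - ln (1 + Ag g u / Ag g t * c)))) 0 s
  = Ag g s / (1 + Ag g s / Ag g t * c).
Proof.
  intros Hs.
  rewrite (RInt_ext _ (fun u => fg g u / (1 + Ag g u / Ag g t * c) ^ 2)).
  2:{ intros x Hx. rewrite Rmin_left in Hx by lra. rewrite Rmax_right in Hx by lra.
      assert (HD : 0 < 1 + Ag g x / Ag g t * c) by (apply D_pos; lra).
      unfold fg. match goal with |- ?a = ?b => change (@eq R a b) end.
      replace (exp (2 * g x)) with (exp (2 * (g x - ln (1 + Ag g x / Ag g t * c))) * exp (2 * ln (1 + Ag g x / Ag g t * c))).
      2:{ rewrite <- exp_plus. f_equal. ring. }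
      replace (exp (2 * ln (1 + Ag g x / Ag g t * c))) with ((1 + Ag g x / Ag g t * c) ^ 2).
      2:{ replace (2 * ln (1 + Ag g x / Ag g t * c)) with (ln (1 + Ag g x / Ag g t * c) + ln (1 + Ag g x / Ag g t * c)) by ring.
          rewrite exp_plus, exp_ln by lra. ring. }
      field. apply D_ne; lra. }
  apply is_RInt_unique.
  replace (Ag g s / (1 + Ag g s / Ag g t * c)) with
    (minus ((fun u => Ag g u / (1 + Ag g u / Ag g t * c)) s) ((fun u => Ag g u / (1 + Ag g u / Ag g t * c)) 0)).
  2:{ simpl. rewrite Ag_0. unfold minus, plus, opp; simpl. field.
      apply D_ne; lra. }
  apply (@is_RInt_derive R_CompleteNormedModule (fun u => Ag g u / (1 + Ag g u / Ag g t * c))).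
  - intros x Hx. rewrite Rmin_left in Hx by lra. rewrite Rmax_right in Hx by lra.
    apply F_deriv. lra.
  - intros x Hx. rewrite Rmin_left in Hx by lra. rewrite Rmax_right in Hx by lra.
    apply df_cont. lra.
Qed.
End K.

Lemma A_good t psi g : (forall u, 0 <= u <= t -> psi u = g u) ->
  forall s, 0 <= s <= t -> A psi s = Ag g s.
Proof.
  intros He s Hs. unfold A, Ag, fg. apply RInt_ext.
  intros x Hx. rewrite Rmin_left in Hx by lra. rewrite Rmax_right in Hx by lra.
  rewrite He by lra. reflexivity.
Qed.

Lemma A_ext t psi1 psi2 : (forall u, 0 <= u <= t -> psi1 u = psi2 u) ->
  forall s, 0 <= s <= t -> A psi1 s = A psi2 s.
Proof.
  intros He s Hs. unfold A. apply RInt_ext.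
  intros x Hx. rewrite Rmin_left in Hx by lra. rewrite Rmax_right in Hx by lra.
  rewrite He by lra. reflexivity.
Qed.

Lemma good_ext t psi1 psi2 : good t psi1 -> (forall u, 0 <= u <= t -> psi1 u = psi2 u) ->
  good t psi2.
Proof.
  intros [g [Hg He]] H. exists g. split; auto. intros u Hu. rewrite <- H by auto. auto.
Qed.

Lemma bbT_ext t z psi1 psi2 : 0 < t -> (forall u, 0 <= u <= t -> psi1 u = psi2 u) ->
  forall s, 0 <= s <= t -> bbT t z psi1 s = bbT t z psi2 s.
Proof.
  intros Ht H s Hs. unfold bbT. rewrite H by auto.
  rewrite (A_ext t psi1 psi2 H s Hs), (A_ext t psi1 psi2 H t) by lra. reflexivity.
Qed.

Lemma calT_ext t psi1 psi2 : 0 < t -> (forall u, 0 <= u <= t -> psi1 u = psi2 u) ->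
  forall s, 0 <= s <= t -> calT t psi1 s = calT t psi2 s.
Proof.
  intros Ht H s Hs. unfold calT. rewrite (H t) by lra. apply bbT_ext; auto.
Qed.

Section P.
Variable t : R.
Hypothesis Ht : 0 < t.

Lemma A_facts psi : good t psi ->
  0 < A psi t /\ (forall s, 0 <= s <= t -> 0 <= A psi s <= A psi t) /\
  (forall s, 0 < s <= t -> 0 < A psi s).
Proof.
  intros [g [Hg He]].
  rewrite (A_good t psi g He t) by lra.
  split; [apply Ag_pos; auto|split].
  - intros s Hs. rewrite (A_good t psi g He s) by lra.
    split. apply Ag_nonneg; auto; lra. apply Ag_mono; auto; lra.
  - intros s Hs. rewrite (A_good t psi g He s) by lra. apply Ag_pos; auto; lra.
Qed.

Lemma Dpos_good psi z s : good t psi -> 0 <= s <= t ->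
  0 < 1 + A psi s / A psi t * (exp z - 1).
Proof.
  intros Hg Hs. destruct (A_facts psi Hg) as [HT [Ha _]]. specialize (Ha s Hs).
  apply conv_pos.
  split. apply Rdiv_le_0_compat; lra.
  apply (proj1 (Rdiv_le_1 _ _ HT)); lra.
  pose proof (exp_pos z). lra.
Qed.

Lemma A_bbT psi z s : good t psi -> 0 <= s <= t ->
  A (bbT t z psi) s = A psi s / (1 + A psi s / A psi t * (exp z - 1)).
Proof.
  intros Hgd Hs. destruct Hgd as [g [Hg He]].
  rewrite (A_good t psi g He s Hs), (A_good t psi g He t) by lra.
  unfold A at 1, bbT.
  rewrite (RInt_ext _ (fun u => exp (2 * (g u - ln (1 + Ag g u / Ag g t * (exp z - 1)))))).
  - apply key; auto. pose proof (exp_pos z); lra.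
  - intros x Hx. rewrite Rmin_left in Hx by lra. rewrite Rmax_right in Hx by lra.
    rewrite He by lra. rewrite (A_good t psi g He x), (A_good t psi g He t) by lra.
    reflexivity.
Qed.

Lemma good_bbT psi z : good t psi -> good t (bbT t z psi).
Proof.
  intros Hgd. destruct Hgd as [g [Hg He]].
  exists (fun u => g u - ln (1 + Ag g (cl t u) / Ag g t * (exp z - 1))). split.
  - intros x.
    apply (continuous_minus g (fun u => ln (1 + Ag g (cl t u) / Ag g t * (exp z - 1)))).
    apply Hg.
    apply (continuous_comp (cl t) (fun v => ln (1 + Ag g v / Ag g t * (exp z - 1)))).
    apply cl_cont.
    apply (continuous_comp (fun v => 1 + Ag g v / Ag g t * (exp z - 1)) ln).
    apply D_cont; auto.
    apply continuous_ln. apply D_pos; auto. pose proof (exp_pos z); lra.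
    apply cl_in; lra.
  - intros u Hu. unfold bbT. rewrite cl_id by auto. rewrite He by auto.
    rewrite (A_good t psi g He u), (A_good t psi g He t) by lra. reflexivity.
Qed.

Lemma bbT_t psi z : good t psi -> bbT t z psi t = psi t - z.
Proof.
  intros Hg. destruct (A_facts psi Hg) as [HT _]. unfold bbT.
  replace (1 + A psi t / A psi t * (exp z - 1)) with (exp z) by (field; lra).
  rewrite ln_exp. reflexivity.
Qed.

Lemma bbT_0 psi s : bbT t 0 psi s = psi s.
Proof. unfold bbT. rewrite exp_0. replace (1 + A psi s / A psi t * (1 - 1)) with 1 by ring.
  rewrite ln_1. ring. Qed.

Lemma bbT_comp psi z w s : good t psi -> 0 <= s <= t ->
  bbT t w (bbT t z psi) s = bbT t (z + w) psi s.
Proof.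
  intros Hg Hs. unfold bbT at 1.
  rewrite (A_bbT psi z s Hg Hs), (A_bbT psi z t Hg) by lra.
  pose proof (Dpos_good psi z s Hg Hs) as HD.
  pose proof (Dpos_good psi (z + w) s Hg Hs) as HX.
  destruct (A_facts psi Hg) as [HT _].
  pose proof (exp_pos z). pose proof (exp_pos w).
  unfold bbT. rewrite exp_plus in *.
  set (a := A psi s) in *. set (T := A psi t) in *.
  replace (1 + a / (1 + a / T * (exp z - 1)) / (T / (1 + T / T * (exp z - 1))) * (exp w - 1))
    with ((1 + a / T * (exp z * exp w - 1)) * / (1 + a / T * (exp z - 1))).
  2:{ assert (0 < T * (1 + a / T * (exp z - 1))) by (apply Rmult_lt_0_compat; lra).
      replace (T * (1 + a / T * (exp z - 1))) with (T + a * (exp z - 1)) in H1 by (field; lra).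
      field. repeat split; lra. }
  rewrite ln_mult, ln_Rinv; try lra. apply Rinv_0_lt_compat; lra.
Qed.

End P.

Lemma A_Rev t phi s : 0 < t -> good t phi -> 0 <= s <= t ->
  A (Rev t phi) s = exp (- (2 * phi t)) * (A phi t - A phi (t - s)).
Proof.
  intros Ht Hgd Hs. destruct Hgd as [g [Hg He]].
  rewrite (A_good t phi g He t), (A_good t phi g He (t - s)) by lra.
  rewrite He by lra.
  unfold A, Rev.
  rewrite (RInt_ext _ (fun u => exp (- (2 * g t)) * fg g (t - u))).
  2:{ intros x Hx. rewrite Rmin_left in Hx by lra. rewrite Rmax_right in Hx by lra.
      rewrite !He by lra. unfold fg. rewrite <- exp_plus. f_equal. ring. }
  apply is_RInt_unique.
  replace (exp (- (2 * g t)) * (Ag g t - Ag g (t - s))) with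
    (minus ((fun u => - exp (- (2 * g t)) * Ag g (t - u)) s) ((fun u => - exp (- (2 * g t)) * Ag g (t - u)) 0)).
  2:{ unfold minus, plus, opp; simpl. replace (t - 0) with t by ring. ring. }
  apply (@is_RInt_derive R_CompleteNormedModule (fun u => - exp (- (2 * g t)) * Ag g (t - u))).
  - intros x Hx.
    pose proof (Ag_deriv g Hg (t - x)) as Hd.
    assert (Hdd : Derive (fun x0 : R => Ag g x0) (t - x) = fg g (t - x)) by (apply is_derive_unique; exact Hd).
    assert (Hex : ex_derive (fun x0 : R => Ag g x0) (t - x)) by (eexists; exact Hd).
    auto_derive. auto. unfold Rminus in Hdd. rewrite Hdd. match goal with |- ?a = ?b => change (@eq R a b) end. unfold Rminus. ring.
  - intros x Hx.
    apply (continuous_mult (fun _ => exp (- (2 * g t))) (fun u => fg g (t - u))).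
    apply continuous_const.
    apply (continuous_comp (fun u => t - u) (fg g)).
    apply (continuous_minus (fun _ => t) (fun u => u)). apply continuous_const. apply continuous_id.
    apply fg_cont; auto.
Qed.

Lemma Dpos2 t psi z s : 0 < t -> good t psi -> 0 <= s <= t ->
  0 < A psi t + A psi s * (exp z - 1).
Proof.
  intros Ht Hg Hs. destruct (A_facts t Ht psi Hg) as [HT _].
  pose proof (Dpos_good t Ht psi z s Hg Hs).
  replace (A psi t + A psi s * (exp z - 1)) with (A psi t * (1 + A psi s / A psi t * (exp z - 1))) by (field; lra).
  apply Rmult_lt_0_compat; lra.
Qed.

Theorem proposition2p2 (t : R) (ht : 0 < t) :
  (* (i) *)
  (forall phi, cont_on_0t t phi -> calT t phi t = - phi t) /\
  (* (ii) *)
  (forall phi, cont_on_0t t phi ->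
     (forall s, 0 < s <= t ->
        / A (calT t phi) s = / A phi s + (exp (2 * phi t) - 1) / A phi t) /\
     A (calT t phi) t = exp (- (2 * phi t)) * A phi t) /\
  (* (iii) *)
  (forall phi, cont_on_0t t phi ->
     forall s, 0 <= s <= t -> Zf (calT t phi) s = Zf phi s) /\
  (* (iv) *)
  (forall (z : R) phi, cont_on_0t t phi ->
     forall s, 0 <= s <= t ->
       calT t (bbT t z (calT t (bbT t z phi))) s = phi s) /\
  (forall phi, cont_on_0t t phi ->
     forall s, 0 <= s <= t -> calT t (calT t phi) s = phi s) /\
  (forall (z : R) phi, cont_on_0t t phi ->
     forall s, 0 <= s <= t -> calT t (bbT t z phi) s = bbT t (2 * phi t - z) phi s) /\
  (* (v) *)
  (forall phi, cont_on_0t t phi -> phi 0 = 0 ->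
     forall s, 0 <= s <= t -> Rev t (calT t phi) s = calT t (Rev t phi) s).
Proof.
  assert (IVa : forall z psi, good t psi -> forall s, 0 <= s <= t ->
            calT t (bbT t z psi) s = bbT t (2 * psi t - z) psi s).
  { intros z psi Hg s Hs. unfold calT. rewrite bbT_t by auto.
    rewrite bbT_comp by auto. f_equal. ring. }
  assert (IVb : forall psi, good t psi -> forall s, 0 <= s <= t -> calT t (calT t psi) s = psi s).
  { intros psi Hg s Hs. unfold calT at 2. rewrite IVa by auto.
    replace (2 * psi t - 2 * psi t) with 0 by ring. apply bbT_0. }
  split; [|split; [|split; [|split; [|split; [|split]]]]].
  - intros phi Hc. pose proof (good_of_cont t phi ht Hc) as Hg.
    unfold calT. rewrite bbT_t by auto. ring.
  - intros phi Hc. pose proof (good_of_cont t phi ht Hc) as Hg.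
    destruct (A_facts t ht phi Hg) as [HT [Ha Hp]].
    split.
    + intros s Hs. unfold calT. rewrite A_bbT by (auto; lra).
      pose proof (Hp s Hs). pose proof (Dpos_good t ht phi (2 * phi t) s Hg ltac:(lra)).
      pose proof (Dpos2 t phi (2 * phi t) s ht Hg ltac:(lra)).
      field. repeat split; lra.
    + unfold calT. rewrite A_bbT by (auto; lra). rewrite exp_Ropp.
      pose proof (exp_pos (2 * phi t)).
      pose proof (Dpos2 t phi (2 * phi t) t ht Hg ltac:(lra)).
      field; repeat split; lra.
  - intros phi Hc s Hs. pose proof (good_of_cont t phi ht Hc) as Hg.
    pose proof (Dpos_good t ht phi (2 * phi t) s Hg Hs) as HD.
    unfold Zf, calT. rewrite A_bbT by auto. unfold bbT.
    replace (- (phi s - ln (1 + A phi s / A phi t * (exp (2 * phi t) - 1))))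
      with (- phi s + ln (1 + A phi s / A phi t * (exp (2 * phi t) - 1))) by ring.
    pose proof (Dpos2 t phi (2 * phi t) s ht Hg Hs).
    destruct (A_facts t ht phi Hg) as [HT _].
    rewrite exp_plus, exp_ln by lra. field; repeat split; lra.
  - intros z phi Hc s Hs. pose proof (good_of_cont t phi ht Hc) as Hg.
    set (psi' := bbT t (2 * phi t - z) phi).
    assert (Hg' : good t psi') by (apply good_bbT; auto).
    assert (E1 : forall u, 0 <= u <= t -> calT t (bbT t z phi) u = psi' u) by (intros; apply IVa; auto).
    assert (E2 : forall u, 0 <= u <= t -> bbT t z (calT t (bbT t z phi)) u = bbT t z psi' u).
    { intros u Hu. apply bbT_ext; auto. }
    rewrite (calT_ext t _ _ ht E2 s Hs).
    rewrite (IVa z psi' Hg' s Hs).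
    unfold psi' at 1. rewrite bbT_t by auto.
    unfold psi'. rewrite bbT_comp by auto.
    replace (2 * phi t - z + (2 * (phi t - (2 * phi t - z)) - z)) with 0 by ring.
    apply bbT_0.
  - intros phi Hc s Hs. apply IVb; auto. apply good_of_cont; auto.
  - intros z phi Hc s Hs. apply IVa; auto. apply good_of_cont; auto.
  - intros phi Hc H0 s Hs. pose proof (good_of_cont t phi ht Hc) as Hg.
    destruct (A_facts t ht phi Hg) as [HT [Ha _]].
    pose proof (Dpos_good t ht phi (2 * phi t) (t - s) Hg ltac:(lra)) as HX.
    assert (HRt : Rev t phi t = - phi t) by (unfold Rev; replace (t - t) with 0 by ring; rewrite H0; ring).
    unfold Rev at 1. unfold calT at 2. rewrite bbT_t by auto.
    unfold calT. rewrite HRt. unfold bbT.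
    rewrite (A_Rev t phi s ht Hg Hs), (A_Rev t phi t ht Hg) by lra.
    replace (t - t) with 0 by ring.
    assert (HA0 : A phi 0 = 0) by (unfold A; rewrite RInt_point; reflexivity).
    rewrite HA0.
    replace (2 * - phi t) with (- (2 * phi t)) by ring.
    rewrite !exp_Ropp.
    pose proof (exp_pos (2 * phi t)) as HE.
    set (E := exp (2 * phi t)) in *. set (a := A phi (t - s)) in *. set (T := A phi t) in *.
    replace (1 + / E * (T - a) / (/ E * (T - 0)) * (/ E - 1))
      with ((1 + a / T * (E - 1)) * / E) by (field; split; lra).
    rewrite ln_mult, ln_Rinv; try lra. 2: apply Rinv_0_lt_compat; lra.
    unfold E. rewrite ln_exp. unfold Rev. ring.
Qed.
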